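(* Fix $\alpha>0$. As $\Gamma\to\infty$, \[ 2\cdot\max\left\{ \sup_{0\leq\rho\leq1}\frac{\alpha E_{0}(\rho,\Gamma)}{\rho+\alpha},\ \sup_{\rho\geq1}\frac{\alpha E_{x}(\rho,\Gamma)}{\rho+\alpha}\right\} =[1+o(1)]\cdot\alpha\log(\Gamma), \] where $E_{0}(\rho,\Gamma)=\frac{1}{2}\left[(1-\beta_{0})(1+\rho)+\Gamma+\log\left(\beta_{0}-\frac{\Gamma}{1+\rho}\right)+\rho\log(\beta_{0})\right]$, $\beta_{0}=\frac{1}{2}\left(1+\frac{\Gamma}{1+\rho}\right)\left[1+\sqrt{1-\frac{4\Gamma\rho}{(1+\rho+\Gamma)^{2}}}\right]$, $E_{x}(\rho,\Gamma)=(1-\beta_{x})\rho+\frac{\Gamma}{2}+\frac{\rho}{2}\log\left[\beta_{x}\left(\beta_{x}-\frac{\Gamma}{2\rho}\right)\right]$, $\beta_{x}=\frac{1}{2}+\frac{\Gamma}{4\rho}+\frac{1}{2}\sqrt{1+\frac{\Gamma^{2}}{4\rho^{2}}}$.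
   Context: The left-hand side is the paper's achievability (lower) bound on the optimal MP$\alpha$E exponent per unit bandwidth $F_\alpha(\Gamma)$ for conveying a parameter over a band-limited AWGN channel at SNR $\Gamma$; $E_0$ and $E_x$ are Gallager's random-coding and expurgated functions for the Gaussian channel. Logarithms are natural. *)

(* Defs.v *)
From Stdlib Require Import Reals.
From Coquelicot Require Import Coquelicot.
Open Scope R_scope.

(* Gallager's random-coding exponent for the Gaussian channel (natural logs). *)
Definition beta0 (rho G : R) : R :=
  / 2 * (1 + G / (1 + rho)) * (1 + sqrt (1 - 4 * G * rho / (1 + rho + G) ^ 2)).

Definition E0 (rho G : R) : R :=
  / 2 * ((1 - beta0 rho G) * (1 + rho) + G
         + ln (beta0 rho G - G / (1 + rho)) + rho * ln (beta0 rho G)).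

Definition betax (rho G : R) : R :=
  / 2 + G / (4 * rho) + / 2 * sqrt (1 + G ^ 2 / (4 * rho ^ 2)).

Definition Ex (rho G : R) : R :=
  (1 - betax rho G) * rho + G / 2
  + rho / 2 * ln (betax rho G * (betax rho G - G / (2 * rho))).

Definition sup_E0 (alpha G : R) : Rbar :=
  Lub_Rbar (fun y => exists rho, 0 <= rho <= 1 /\ y = alpha * E0 rho G / (rho + alpha)).

Definition sup_Ex (alpha G : R) : Rbar :=
  Lub_Rbar (fun y => exists rho, 1 <= rho /\ y = alpha * Ex rho G / (rho + alpha)).

(* the left-hand side: 2 * max { sup_E0, sup_Ex } (real part; finiteness asserted separately) *)
Definition lhs (alpha G : R) : R :=
  2 * Rmax (real (sup_E0 alpha G)) (real (sup_Ex alpha G)).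

(* Main.v *)
Require Import Defs.
From Stdlib Require Import Reals Lra Psatz.
From Coquelicot Require Import Coquelicot.
Open Scope R_scope.

Lemma ln_le1 x : x <= 1 -> ln x <= 0.
Proof.
  intros H. destruct (Rlt_dec 0 x) as [Hx|Hx].
  - rewrite <- ln_1. apply ln_le; auto.
  - unfold ln. destruct (Rlt_dec 0 x); [contradiction|lra].
Qed.

Lemma ln_le_ge1 x y : 1 <= y -> x <= y -> ln x <= ln y.
Proof.
  intros Hy Hxy. destruct (Rlt_dec 0 x) as [Hx|Hx].
  - apply ln_le; auto.
  - assert (ln x = 0). { unfold ln. destruct (Rlt_dec 0 x); [contradiction|reflexivity]. }
    rewrite H. rewrite <- ln_1. apply ln_le; lra.
Qed.

Lemma E0_ub rho G : 0 <= rho -> 0 <= G -> E0 rho G <= rho / 2 * (2 + ln (1 + G)).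
Proof.
  intros Hr HG. unfold E0, beta0.
  set (a := 1 + rho + G).
  set (x := 4 * G * rho / a ^ 2).
  set (S := sqrt (1 - x)).
  set (q := G / (1 + rho)).
  assert (Ha : 0 < a) by (unfold a; lra).
  assert (Hxa2 : x * (a * a) = 4 * G * rho) by (unfold x, a; field; lra).
  assert (Haa : 0 < a * a) by nra.
  assert (Hx0 : 0 <= x) by nra.
  assert (H4 : 4 * G * rho <= a * a) by (unfold a; pose proof (pow2_ge_0 (rho - G)); nra).
  assert (Hx1 : x <= 1) by nra.
  assert (HS0 : 0 <= S) by apply sqrt_pos.
  assert (HS2 : S * S = 1 - x) by (apply sqrt_sqrt; lra).
  assert (HS1 : S <= 1) by nra.
  assert (HSx : 1 - x <= S) by nra.
  assert (Hq1 : q * (1 + rho) = G) by (unfold q; field; lra).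
  assert (Hq0 : 0 <= q) by nra.
  assert (HqG : q <= G) by nra.
  assert (Hqa : (1 + q) * (1 + rho) = a) by (unfold q, a; field; lra).
  assert (Hxa : x * a = 4 * G * rho / a) by (unfold x, a; field; lra).
  assert (T1 : (1 - / 2 * (1 + q) * (1 + S)) * (1 + rho) + G <= 2 * rho).
  { replace ((1 - / 2 * (1 + q) * (1 + S)) * (1 + rho) + G) with (a * (1 - S) / 2)
      by (rewrite <- Hqa; unfold a in *; lra).
    assert (a * (1 - S) <= x * a) by nra.
    assert (4 * G * rho / a <= 4 * rho).
    { apply Rmult_le_reg_r with a. lra. unfold Rdiv. rewrite Rmult_assoc, Rinv_l by lra. unfold a. nra. }
    lra. }
  assert (T2 : ln (/ 2 * (1 + q) * (1 + S) - q) <= 0) by (apply ln_le1; nra).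
  assert (T3 : rho * ln (/ 2 * (1 + q) * (1 + S)) <= rho * ln (1 + G)).
  { apply Rmult_le_compat_l; auto. apply ln_le_ge1; nra. }
  lra.
Qed.

Lemma Ex_bounds rho G : 1 <= rho -> 0 < G ->
  rho / 2 * ln (G / (4 * rho)) <= Ex rho G <= rho / 2 * (1 + ln (1 + G)).
Proof.
  intros Hr HG. unfold Ex, betax.
  set (t := G / (2 * rho)).
  set (s := sqrt (1 + G ^ 2 / (4 * rho ^ 2))).
  assert (Ht : G ^ 2 / (4 * rho ^ 2) = t * t) by (unfold t; field; lra).
  assert (Ht0 : 0 < t) by (unfold t; apply Rdiv_lt_0_compat; lra).
  assert (HtG : t <= G / 2). { unfold t. apply Rmult_le_reg_r with (2*rho). lra.
     unfold Rdiv. rewrite Rmult_assoc, Rinv_l by lra. nra. }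
  assert (Hs0 : 0 <= s) by apply sqrt_pos.
  assert (Hs2 : s * s = 1 + t * t) by (unfold s; rewrite Ht; apply sqrt_sqrt; nra).
  assert (Hst : t <= s) by nra.
  assert (Hs1 : s <= 1 + t) by nra.
  replace (G / (4 * rho)) with (t / 2) by (unfold t; field; lra).
  replace (G / (2 * rho)) with t by reflexivity.
  replace (/ 2 + t / 2 + / 2 * s) with ((1 + t + s) / 2) by field.
  replace ((1 + t + s) / 2 * ((1 + t + s) / 2 - t)) with ((1 + s) / 2) by nra.
  replace ((1 - (1 + t + s) / 2) * rho + G / 2) with (rho * ((1 + t - s) / 2))
    by (unfold t; field; lra).
  split.
  - assert (ln (t / 2) <= ln ((1 + s) / 2)) by (apply ln_le; lra).
    assert (0 <= rho * ((1 + t - s) / 2)) by nra.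
    assert (rho / 2 * ln (t / 2) <= rho / 2 * ln ((1 + s) / 2)) by (apply Rmult_le_compat_l; lra).
    lra.
  - assert (ln ((1 + s) / 2) <= ln (1 + G)) by (apply ln_le_ge1; lra).
    assert (rho * ((1 + t - s) / 2) <= rho / 2) by nra.
    assert (rho / 2 * ln ((1 + s) / 2) <= rho / 2 * ln (1 + G)) by (apply Rmult_le_compat_l; lra).
    lra.
Qed.

Lemma lub_fin (E : R -> Prop) y0 B : E y0 -> (forall y, E y -> y <= B) ->
  is_finite (Lub_Rbar E) /\ (forall y, E y -> y <= real (Lub_Rbar E)) /\ real (Lub_Rbar E) <= B.
Proof.
  intros H0 HB. destruct (Lub_Rbar_correct E) as [Hub Hl].
  assert (HB' : Rbar_le (Lub_Rbar E) B) by (apply Hl; intros y Hy; simpl; apply HB; auto).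
  assert (H0' := Hub y0 H0).
  destruct (Lub_Rbar E) as [r| |]; simpl in *; try contradiction.
  split; [reflexivity|]. split; auto.
Qed.

Lemma frac_ub a rho E L : 0 < a -> 0 <= rho -> 0 <= L -> E <= rho / 2 * L ->
  a * E / (rho + a) <= a * L / 2.
Proof.
  intros Ha Hr HL HE. apply Rmult_le_reg_r with (rho + a). lra.
  replace (a * E / (rho + a) * (rho + a)) with (a * E) by (field; lra). nra.
Qed.

Lemma ln1p_ge0 G : 0 <= G -> 0 <= ln (1 + G).
Proof. intros. rewrite <- ln_1. apply ln_le; lra. Qed.

Lemma bounds alpha G : 0 < alpha -> 1 < G ->
  is_finite (sup_E0 alpha G) /\ is_finite (sup_Ex alpha G) /\
  real (sup_E0 alpha G) <= alpha * (2 + ln (1 + G)) / 2 /\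
  real (sup_Ex alpha G) <= alpha * (2 + ln (1 + G)) / 2 /\
  (forall K, 1 <= K -> alpha * Ex K G / (K + alpha) <= real (sup_Ex alpha G)).
Proof.
  intros Ha HG. pose proof (ln1p_ge0 G ltac:(lra)) as Hl.
  destruct (lub_fin (fun y => exists rho, 0 <= rho <= 1 /\ y = alpha * E0 rho G / (rho + alpha))
     (alpha * E0 0 G / (0 + alpha)) (alpha * (2 + ln (1 + G)) / 2)) as [F1 [_ B1]].
  { exists 0. split; [lra|reflexivity]. }
  { intros y [rho [Hr ->]]. apply frac_ub; try lra. apply E0_ub; lra. }
  destruct (lub_fin (fun y => exists rho, 1 <= rho /\ y = alpha * Ex rho G / (rho + alpha))
     (alpha * Ex 1 G / (1 + alpha)) (alpha * (2 + ln (1 + G)) / 2)) as [F2 [L2 B2]].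
  { exists 1. split; [lra|reflexivity]. }
  { intros y [rho [Hr ->]].
    assert (alpha * Ex rho G / (rho + alpha) <= alpha * (1 + ln (1 + G)) / 2).
    { apply frac_ub; try lra. apply Ex_bounds; lra. }
    lra. }
  unfold sup_E0, sup_Ex. repeat split; auto.
  intros K HK. apply L2. exists K. split; auto.
Qed.

Theorem mainTheorem6 (alpha : R) (halpha : 0 < alpha) :
  Rbar_locally p_infty (fun G => is_finite (sup_E0 alpha G) /\ is_finite (sup_Ex alpha G)) /\
  is_lim (fun G => lhs alpha G / (alpha * ln G)) p_infty 1.
Proof.
  split.
  { exists 1. intros G HG. destruct (bounds alpha G halpha HG) as [? [? _]]. auto. }
  apply is_lim_spec. intros [eps Heps]. simpl.
  set (e := Rmin eps 1).
  assert (He0 : 0 < e) by (unfold e; apply Rmin_pos; lra).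
  assert (He1 : e <= 1) by apply Rmin_r.
  assert (Hee : e <= eps) by apply Rmin_l.
  set (K := 1 + 2 * alpha / e).
  assert (HK1 : 1 <= K). { unfold K. assert (0 <= 2 * alpha / e) by (unfold Rdiv; apply Rmult_le_pos; [lra| apply Rlt_le, Rinv_0_lt_compat; lra]). lra. }
  assert (HKe : e / 2 * K >= alpha).
  { unfold K. replace (e / 2 * (1 + 2 * alpha / e)) with (e / 2 + alpha) by (field; lra). lra. }
  set (c := ln (4 * K)).
  assert (Hc : 0 <= c) by (unfold c; rewrite <- ln_1; apply ln_le; lra).
  set (T := 3 / e + 2 * c / e).
  assert (HT1 : 3 / e <= T). { unfold T. assert (0 <= 2 * c / e) by (unfold Rdiv; apply Rmult_le_pos; [lra| apply Rlt_le, Rinv_0_lt_compat; lra]). lra. }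
  assert (HT2 : 2 * c / e <= T). { unfold T. assert (0 <= 3 / e) by (unfold Rdiv; apply Rmult_le_pos; [lra| apply Rlt_le, Rinv_0_lt_compat; lra]). lra. }
  exists (exp T + 1). intros G HG.
  assert (HexpT := exp_pos T).
  assert (HG1 : 1 < G) by lra.
  assert (HLg : T < ln G) by (rewrite <- (ln_exp T); apply ln_increasing; lra).
  set (Lg := ln G) in *.
  assert (H3 : 3 < e * Lg).
  { assert (3 / e * e = 3) by (field; lra). nra. }
  assert (Hc2 : 2 * c < e * Lg).
  { assert (2 * c / e * e = 2 * c) by (field; lra). nra. }
  assert (HLg0 : 0 < Lg) by nra.
  destruct (bounds alpha G halpha HG1) as [_ [_ [B1 [B2 L2]]]].
  pose proof (L2 K HK1) as LK.
  destruct (Ex_bounds K G HK1 ltac:(lra)) as [ExL _].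
  rewrite ln_div in ExL by lra. fold Lg c in ExL.
  assert (Hln2 : ln (1 + G) <= ln 2 + Lg).
  { unfold Lg; rewrite <- ln_mult by lra. apply ln_le; lra. }
  assert (Hl2 : ln 2 < 1).
  { rewrite <- (ln_exp 1). apply ln_increasing. lra. pose proof (exp_ineq1 1 ltac:(lra)). lra. }
  unfold lhs.
  set (D := 2 * Rmax (real (sup_E0 alpha G)) (real (sup_Ex alpha G))).
  assert (DU : D <= alpha * (3 + Lg)).
  { unfold D. assert (Rmax (real (sup_E0 alpha G)) (real (sup_Ex alpha G)) <= alpha * (2 + ln (1 + G)) / 2)
      by (apply Rmax_lub; auto). nra. }
  set (v := alpha * Ex K G / (K + alpha)) in LK.
  assert (DL : 2 * v <= D). { unfold D. pose proof (Rmax_r (real (sup_E0 alpha G)) (real (sup_Ex alpha G))). lra. }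
  assert (Hv : v * (K + alpha) = alpha * Ex K G) by (unfold v; field; lra).
  assert (Low : (1 - e) * (alpha * Lg) < D).
  { assert (A1 : K * (Lg - c) <= 2 * Ex K G) by lra.
    assert (A2 : (1 - e / 2) * (K + alpha) <= K) by nra.
    assert (A3 : (1 - e / 2) * Lg < Lg - c) by lra.
    assert (A4 : (1 - e / 2) * (K + alpha) * ((1 - e / 2) * Lg) < K * (Lg - c)).
    { apply Rlt_le_trans with ((1 - e / 2) * (K + alpha) * (Lg - c)).
      apply Rmult_lt_compat_l. nra. lra.
      apply Rmult_le_compat_r. nra. auto. }
    assert (A5 : (1 - e) * Lg * (K + alpha) <= (1 - e / 2) * (K + alpha) * ((1 - e / 2) * Lg)) by nra.
    assert (A6 : (1 - e) * Lg * (K + alpha) < 2 * v * (K + alpha) / alpha) .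
    { replace (2 * v * (K + alpha) / alpha) with (2 * Ex K G) by (rewrite Rmult_assoc, Hv; field; lra). lra. }
    assert (A7 : (1 - e) * Lg < 2 * v / alpha).
    { apply Rmult_lt_reg_r with (K + alpha). lra.
      replace (2 * v / alpha * (K + alpha)) with (2 * v * (K + alpha) / alpha) by (field; lra). lra. }
    assert (A8 : 2 * v / alpha * alpha = 2 * v) by (field; lra).
    nra. }
  assert (Up : D < (1 + e) * (alpha * Lg)) by nra.
  assert (Hd : 0 < alpha * Lg) by nra.
  apply Rlt_le_trans with e; auto.
  apply Rabs_def1.
  - apply Rmult_lt_reg_r with (alpha * Lg); auto.
    replace ((D / (alpha * Lg) - 1) * (alpha * Lg)) with (D - alpha * Lg) by (field; lra). nra.
  - apply Rmult_lt_reg_r with (alpha * Lg); auto.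
    replace ((D / (alpha * Lg) - 1) * (alpha * Lg)) with (D - alpha * Lg) by (field; lra). nra.
Qed.
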